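(* Let $n\ge0$ and $l\ge0$. In $H^*(\operatorname{Gr}_2(\mathbb{R}^{2^{n+1}+1+2l});\mathbb{Z}/2)$, $$Q_n(w_2^{2l+1}) = w_1^{2l+2}\bar w_{2^{n+1}-1+2l}.$$
   Context: $H^*(\operatorname{Gr}_2(\mathbb{R}^m);\mathbb{Z}/2)=\mathbb{Z}/2[w_1,w_2]/(\bar w_k : k\ge m-1)$, where $w_1,w_2$ are Stiefel–Whitney classes of the tautological bundle and $\bar w_k$ are defined by $(1+w_1+w_2)(1+\bar w_1+\bar w_2+\cdots)=1$. $Q_n$ is the Milnor primitive: $Q_0=Sq^1$, $Q_n=[Q_{n-1},Sq^{2^n}]$. *)

(* Defs.v *)
From HB Require Import structures.
From mathcomp Require Import all_boot all_algebra.
From mathcomp Require Import mpoly.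
Set Implicit Arguments. Unset Strict Implicit. Unset Printing Implicit Defensive.
Import GRing.Theory.
Local Open Scope ring_scope.

(* H^*(BO(2);Z/2) = F_2[w1,w2], modelled as {mpoly 'F_2[2]}:
   'X_0 = w1 (degree 1), 'X_1 = w2 (degree 2). *)
Notation F2 := 'F_2.
Notation P := {mpoly F2[2]}.

Definition w1 : P := 'X_(@Ordinal 2 0 erefl).
Definition w2 : P := 'X_(@Ordinal 2 1 erefl).

Definition wdeg (m : 'X_{1..2}) : nat := (m (@Ordinal 2 0 erefl) + 2 * m (@Ordinal 2 1 erefl))%N.

Definition hcomp (d : nat) (p : P) : P :=
  \sum_(m <- msupp p | wdeg m == d) p@_m *: 'X_[m].

(* total Steenrod square: the ring map determined by the Wu formula
   Sq(w1) = w1 + w1^2,  Sq(w2) = w2 + w1 w2 + w2^2 *)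
Definition Sq_total (p : P) : P :=
  comp_mpoly [tuple of [:: w1 + w1 ^+ 2; w2 + w1 * w2 + w2 ^+ 2]] p.

Definition Sq (i : nat) (p : P) : P :=
  \sum_(m <- msupp p) p@_m *: hcomp (wdeg m + i) (Sq_total 'X_[m]).

Fixpoint Q (n : nat) (p : P) : P :=
  match n with
  | 0 => Sq 1 p
  | k.+1 => Q k (Sq (2 ^ k.+1) p) - Sq (2 ^ k.+1) (Q k p)
  end.

(* dual classes: (1 + w1 + w2)(1 + wbar_1 + wbar_2 + ...) = 1, i.e.
   wbar_0 = 1, wbar_k = -(w1 wbar_{k-1} + w2 wbar_{k-2}) *)
Fixpoint wbar_pair (k : nat) : P * P :=  (* (wbar_k, wbar_{k-1}) with wbar_{-1} = 0 *)
  match k with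
  | 0 => (1, 0)
  | k'.+1 => let '(a, b) := wbar_pair k' in (- (w1 * a + w2 * b), a)
  end.
Definition wbar (k : nat) : P := (wbar_pair k).1.

Definition in_Gr_ideal (m : nat) (p : P) : Prop :=
  exists s : seq (P * nat),
    all (fun c => (m - 1 <= c.2)%N) s /\
    p = \sum_(c <- s) c.1 * wbar c.2.

(* equality in H^*(Gr_2(R^m);Z/2) = F_2[w1,w2]/(wbar_k : k >= m-1) *)
Definition eq_in_Gr2 (m : nat) (p q : P) : Prop := in_Gr_ideal m (p - q).

(* Main.v *)
From HB Require Import structures.
Require Import Defs.
From mathcomp Require Import all_boot all_algebra.
From mathcomp Require Import mpoly.
From mathcomp Require Import ring zify.
Set Implicit Arguments. Unset Strict Implicit. Unset Printing Implicit Defensive.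
Import GRing.Theory.
Local Open Scope ring_scope.

Lemma wdegE m : wdeg m = mnmwgt m.
Proof. rewrite /wdeg /mnmwgt big_ord_recr big_ord1 /= muln1 [(m ord_max * 2)%N]mulnC; congr (m _ + 2 * m _)%N; exact/val_inj. Qed.

Definition Hw (d : nat) := @ishomog1 2 F2 d mnmwgt.

Definition graded (e : nat) (F : {poly P}) := forall j, F`_j \is Hw (e + j).

Lemma graded_mul e1 e2 F G : graded e1 F -> graded e2 G -> graded (e1 + e2) (F * G).
Proof.
move=> hF hG j; rewrite coefM; apply: rpred_sum => k _.
have -> : (e1 + e2 + j = (e1 + k) + (e2 + (j - k)))%N.
  by have := ltn_ord k; lia.
exact: dhomogM.
Qed.

Lemma graded1 : graded 0 1.
Proof. move=> j; rewrite coef1; case: eqP => [->|_]; [exact: dhomog1 | exact: rpred0]. Qed.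

Lemma graded_exp e F k : graded e F -> graded (e * k) (F ^+ k).
Proof.
move=> hF; elim: k => [|k IH]; first by rewrite muln0 expr0; exact: graded1.
by rewrite exprS mulnS; apply: graded_mul.
Qed.

Lemma graded_eval e F i : graded e F -> pihomog mnmwgt (e + i) (F.[1]) = F`_i.
Proof.
move=> hF; rewrite horner_coef linear_sum /=.
under eq_bigr => j _ do rewrite expr1n mulr1.
case: (ltnP i (size F)) => hi.
  rewrite (bigD1 (Ordinal hi)) //= pihomog_dE; last exact: hF.
  rewrite big1 ?addr0 // => j /eqP hj.
  apply: (pihomog_ne0 _ (hF j)).
  apply/eqP => /addnI h; apply: hj; exact/val_inj.
rewrite nth_default // big1 // => j _.
apply: (pihomog_ne0 _ (hF j)); apply/eqP => /addnI h.
by move: hi; rewrite -h leqNgt ltn_ord.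
Qed.

Definition o0 : 'I_2 := @Ordinal 2 0 erefl.
Definition o1 : 'I_2 := @Ordinal 2 1 erefl.

Definition Tw_t (i : 'I_2) : {poly P} :=
  if val i == 0%N then w1%:P + (w1 ^+ 2)%:P * 'X
  else w2%:P + (w1 * w2)%:P * 'X + (w2 ^+ 2)%:P * 'X^2.

Notation Psiw := (mmap (polyC \o @mpolyC 2 F2) Tw_t).

Lemma hcompE d p : hcomp d p = pihomog mnmwgt d p.
Proof. by rewrite /hcomp pihomogE; apply: eq_bigl => m; rewrite wdegE. Qed.

Lemma Hw_w1 : w1 \is Hw 1.
Proof. by rewrite /Hw /w1 dhomogX; apply/eqP; apply: mnmwgt1. Qed.
Lemma Hw_w2 : w2 \is Hw 2.
Proof. by rewrite /Hw /w2 dhomogX; apply/eqP; apply: mnmwgt1. Qed.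

Lemma graded_Tw0 : graded 1 (Tw_t (o0)).
Proof.
move=> j; rewrite /Tw_t /= coefD coefC coefCM coefX.
case: j => [|[|j]] /=; rewrite ?mulr0 ?mulr1 ?addr0 ?add0r.
- exact: Hw_w1.
- exact: (dhomogMn 2 Hw_w1).
- exact: rpred0.
Qed.

Lemma graded_Tw1 : graded 2 (Tw_t (o1)).
Proof.
move=> j; rewrite /Tw_t /= !coefD coefC !coefCM coefX coefXn.
case: j => [|[|[|j]]] /=; rewrite ?mulr0 ?mulr1 ?addr0 ?add0r.
- exact: Hw_w2.
- exact: (dhomogM Hw_w1 Hw_w2).
- exact: (dhomogMn 2 Hw_w2).
- exact: rpred0.
Qed.

Lemma graded_mmap1 m : graded (wdeg m) (mmap1 Tw_t m).
Proof.
rewrite /mmap1 big_ord_recr big_ord1 /wdeg.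
have -> : widen_ord (leqnSn 1) ord0 = o0 by exact/val_inj.
have -> : (@ord_max 1) = o1 by exact/val_inj.
apply: graded_mul.
  by rewrite -[X in graded X _]mul1n; exact (graded_exp _ graded_Tw0).
exact (graded_exp _ graded_Tw1).
Qed.

Lemma eval_mmap1 m : (mmap1 Tw_t m).[1] = Sq_total 'X_[m].
Proof.
rewrite /Sq_total comp_mpolyX /mmap1 horner_prod; apply: eq_bigr => i _.
rewrite horner_exp; congr (_ ^+ _).
case: i => [[|[|i]] hi] //; rewrite /Tw_t /=.
- by rewrite hornerD hornerC hornerMX hornerC mulr1.
- by rewrite !hornerD !hornerC hornerMX hornerC mulr1 hornerCM hornerXn expr1n mulr1.
Qed.

Lemma SqE i p : Sq i p = (Psiw p)`_i.
Proof.
rewrite /Sq /mmap coef_sum; apply: eq_bigr => m _.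
by rewrite /= coefCM mul_mpolyC hcompE -eval_mmap1 (graded_eval _ (graded_mmap1 m)).
Qed.

Definition Sy : 2.-tuple P := [tuple mesym 2 F2 i.+1 | i < 2].
Notation phi := (comp_mpoly Sy).

Definition x0 : P := 'X_o0.
Definition x1 : P := 'X_o1.

Lemma phi_w1 : phi w1 = x0 + x1.
Proof. rewrite /w1 comp_mpolyXU -(tnth_nth 0 Sy) /Sy tnth_map tnth_ord_tuple mesym1E big_ord_recr big_ord1 /x0 /x1 /=; congr ('X__ + 'X__); exact/val_inj. Qed.
Lemma phi_w2 : phi w2 = x0 * x1.
Proof. rewrite /w2 comp_mpolyXU -(tnth_nth 0 Sy) /Sy tnth_map tnth_ord_tuple mesymnnE big_ord_recr big_ord1 /x0 /x1 /=; congr ('X__ * 'X__); exact/val_inj. Qed.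

Definition Txy_t (i : 'I_2) : {poly P} := ('X_i)%:P + ('X_i ^+ 2)%:P * 'X.
Notation Psixy := (mmap (polyC \o @mpolyC 2 F2) Txy_t).
Definition Sqxy_def (i : nat) (p : P) : P := (Psixy p)`_i.
Fact Sqxy_key : unit. Proof. exact: tt. Qed.
Definition Sqxy := locked_with Sqxy_key Sqxy_def.
Lemma SqxyE i p : Sqxy i p = (Psixy p)`_i.
Proof. by rewrite /Sqxy unlock. Qed.

Lemma mmap_comp (S T : comNzRingType) (f : {rmorphism F2 -> S}) (h : 'I_2 -> S)
   (g : {rmorphism S -> T}) (p : P) :
  g (mmap f h p) = mmap (g \o f) (g \o h) p.
Proof.
rewrite /mmap rmorph_sum; apply: eq_bigr => m _; rewrite rmorphM /mmap1 rmorph_prod.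
congr (_ * _); apply: eq_bigr => i _; by rewrite rmorphXn.
Qed.

Lemma mmap_ext (S : nzRingType) (f1 f2 : F2 -> S) (h1 h2 : 'I_2 -> S) (p : P) :
  f1 =1 f2 -> h1 =1 h2 -> mmap f1 h1 p = mmap f2 h2 p.
Proof.
move=> hf hh; rewrite /mmap; apply: eq_bigr => m _; by rewrite hf (mmap1_eq _ hh).
Qed.

Lemma two0 : (2%:R : P) = 0.
Proof. by rewrite -mpolyC_nat; apply/eqP; rewrite mpolyC_eq0. Qed.

Lemma two0p : (2%:R : {poly P}) = 0.
Proof. by rewrite -polyC_natr two0. Qed.

Lemma hX (j : 'I_2) : Psixy 'X_j = Txy_t j.
Proof. by rewrite mmapX mmap1U. Qed.

Lemma tSy0 : tnth Sy o0 = phi w1.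
Proof. by rewrite /w1 comp_mpolyXU -(tnth_nth 0 Sy). Qed.
Lemma tSy1 : tnth Sy o1 = phi w2.
Proof. by rewrite /w2 comp_mpolyXU -(tnth_nth 0 Sy). Qed.

Lemma L0 : map_poly phi (Tw_t o0) = (x0+x1)%:P + ((x0+x1)^+2)%:P * 'X.
Proof.
rewrite /Tw_t /= rmorphD rmorphM /= !map_polyC map_polyX /=.
by rewrite rmorphXn /= phi_w1.
Qed.
Lemma L1 : map_poly phi (Tw_t o1) =
  (x0*x1)%:P + ((x0+x1)*(x0*x1))%:P * 'X + ((x0*x1)^+2)%:P * 'X^2.
Proof.
rewrite /Tw_t /= !rmorphD !rmorphM /= !map_polyC !map_polyX /= phi_w1 phi_w2.
rewrite !rmorphD !rmorphM /=; ring.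
Qed.

Lemma R0 : Psixy (tnth Sy o0) = Txy_t o0 + Txy_t o1.
Proof. by rewrite tSy0 phi_w1 rmorphD /= /x0 /x1 !hX. Qed.
Lemma R1 : Psixy (tnth Sy o1) = Txy_t o0 * Txy_t o1.
Proof. by rewrite tSy1 phi_w2 rmorphM /= /x0 /x1 !hX. Qed.

Lemma phi_Psi p : map_poly phi (Psiw p) = Psixy (phi p).
Proof.
rewrite mmap_comp [in RHS]/comp_mpoly mmap_comp.
apply: mmap_ext => [c|i] /=.
  by rewrite map_polyC /= comp_mpolyC mmapC.
case: i => [[|[|i]] hi] //.
- rewrite (_ : Ordinal hi = o0); last exact/val_inj.
  rewrite L0 R0 /Txy_t /x0 /x1 !rmorphXn !rmorphD /=.
  set a := (('X_o0 : P)%:P); set b := (('X_o1 : P)%:P).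
  apply/eqP; rewrite -subr_eq0; apply/eqP.
  transitivity (2%:R * a * b * 'X : {poly P}); first by ring.
  by rewrite two0p !mul0r.
- rewrite (_ : Ordinal hi = o1); last exact/val_inj.
  rewrite L1 R1 /Txy_t /x0 /x1 !rmorphXn !rmorphM /= !rmorphD /=.
  ring.
Qed.

Lemma phi_Sq i p : phi (Sq i p) = Sqxy i (phi p).
Proof. by rewrite SqE SqxyE -phi_Psi coef_map. Qed.

Fixpoint Qx (n : nat) (p : P) : P :=
  match n with
  | 0 => Sqxy 1 p
  | k.+1 => Qx k (Sqxy (2 ^ k.+1) p) - Sqxy (2 ^ k.+1) (Qx k p)
  end.

Lemma phi_Q n p : phi (Q n p) = Qx n (phi p).
Proof.
elim: n p => [|n IH] p /=; first exact: phi_Sq.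
transitivity (phi (Q n (Sq (2 ^ n.+1) p)) - phi (Sq (2 ^ n.+1) (Q n p))).
  exact: rmorphB.
by rewrite IH phi_Sq phi_Sq IH.
Qed.

Lemma SqB i p q : Sqxy i (p - q) = Sqxy i p - Sqxy i q.
Proof. by rewrite !SqxyE rmorphB coefB. Qed.
Lemma SqD i p q : Sqxy i (p + q) = Sqxy i p + Sqxy i q.
Proof. by rewrite !SqxyE rmorphD coefD. Qed.
Lemma Sq0 i : Sqxy i 0 = 0.
Proof. by rewrite !SqxyE rmorph0 coef0. Qed.
Lemma Sqsum i N (F : 'I_N -> P) : Sqxy i (\sum_(k < N) F k) = \sum_(k < N) Sqxy i (F k).
Proof. by rewrite SqxyE rmorph_sum coef_sum; apply: eq_bigr => k _; rewrite SqxyE. Qed.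

Lemma subACA4 (a b c d : P) : a - b - (c - d) = a - c - (b - d).
Proof. ring. Qed.
Lemma addACA4 (a b c d : P) : a + b - (c + d) = a - c + (b - d).
Proof. ring. Qed.

Lemma QB n p q : Qx n (p - q) = Qx n p - Qx n q.
Proof.
elim: n p q => [|n IH] p q /=; first exact: SqB.
by rewrite SqB IH IH SqB subACA4.
Qed.
Lemma QD n p q : Qx n (p + q) = Qx n p + Qx n q.
Proof.
elim: n p q => [|n IH] p q /=; first exact: SqD.
by rewrite SqD IH IH SqD addACA4.
Qed.
Lemma Q0 n : Qx n 0 = 0.
Proof. by rewrite -[X in Qx n X](subrr (0 : P)) QB subrr. Qed.
Lemma Qsum n N (F : 'I_N -> P) : Qx n (\sum_(k < N) F k) = \sum_(k < N) Qx n (F k).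
Proof.
elim: N F => [|N IH] F; first by rewrite !big_ord0 Q0.
by rewrite !big_ord_recr QD IH.
Qed.

Lemma Cartan i p q : Sqxy i (p * q) = \sum_(k < i.+1) Sqxy k p * Sqxy (i - k) q.
Proof. by rewrite SqxyE rmorphM coefM; apply: eq_bigr => k _; rewrite !SqxyE. Qed.

Lemma S0 p : Sqxy 0 p = p.
Proof.
rewrite SqxyE -horner_coef0 -/(horner_eval 0 _) mmap_comp.
rewrite -[RHS](comp_mpoly_id p) /comp_mpoly.
apply: mmap_ext => [c|i] /=; first by rewrite /horner_eval hornerC.
by rewrite /horner_eval /Txy_t tnth_mktuple !hornerE.
Qed.

Lemma SC j c : Sqxy j c%:MP = if j == 0%N then c%:MP else 0.
Proof. by rewrite SqxyE mmapC /= coefC. Qed.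

Lemma SX j i : Sqxy j 'X_i = if j == 0%N then 'X_i else if j == 1%N then 'X_i ^+ 2 else 0.
Proof.
rewrite SqxyE hX /Txy_t coefD coefC coefCM coefX.
by case: j => [|[|j]] /=; rewrite ?mulr0 ?mulr1 ?addr0 ?add0r.
Qed.

Lemma frob2 (R : comNzRingType) (a b : R) r : (2%:R : R) = 0 ->
  (a + b) ^+ (2 ^ r) = a ^+ (2 ^ r) + b ^+ (2 ^ r).
Proof.
move=> h2; elim: r => [|r IH]; first by rewrite !expr1.
by rewrite expnS mulnC !exprM IH sqrrD -mulr_natr h2 mulr0 addr0.
Qed.

Lemma SF r j i : Sqxy j ('X_i ^+ (2 ^ r)) =
  if j == 0%N then 'X_i ^+ (2 ^ r) else if j == (2 ^ r)%N then 'X_i ^+ (2 ^ r.+1) else 0.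
Proof.
rewrite SqxyE rmorphXn /= hX /Txy_t (frob2 _ _ _ two0p) exprMn -!rmorphXn /=.
rewrite coefD coefC coefCM coefXn -exprM -expnS.
case: (eqVneq j 0%N) => [->|hj].
  by rewrite (_ : (0 == 2^r)%N = false) ?mulr0 ?addr0 // eq_sym eqn0Ngt expn_gt0.
by rewrite add0r; case: eqP => _; rewrite ?mulr1 ?mulr0.
Qed.

Lemma addxx (a : P) : a + a = 0.
Proof. by rewrite -mulr2n -mulr_natr two0 mulr0. Qed.
Lemma oppP (a : P) : - a = a.
Proof. by rewrite -[LHS]addr0 -(addxx a) addrA addNr add0r. Qed.

Lemma QC n c : Qx n c%:MP = 0.
Proof.
elim: n => [|n IH] /=; first by rewrite SC.
by rewrite IH Sq0 SC eqn0Ngt expn_gt0 /= Q0 subrr.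
Qed.

Definition Der n := forall p q, Qx n (p * q) = Qx n p * q + p * Qx n q.
Definition QXv n := forall i : 'I_2, Qx n 'X_i = 'X_i ^+ (2 ^ n.+1).
Definition Com n := forall j p, (j < 2 ^ n.+1)%N -> Qx n (Sqxy j p) = Sqxy j (Qx n p).

Lemma Der0 : Der 0.
Proof.
move=> p q /=; rewrite Cartan big_ord_recr big_ord1 /=.
by rewrite subn0 subnn !S0 addrC.
Qed.

Lemma QX0 : QXv 0.
Proof. by move=> i /=; rewrite SX. Qed.

Lemma K2 n : (1 < 2 ^ n.+1)%N.
Proof. by rewrite -{1}(expn0 2) ltn_exp2l. Qed.

Lemma QXS n : QXv n -> QXv n.+1.
Proof.
move=> hX i /=; have hK := K2 n.
rewrite SX eqn0Ngt expn_gt0 /=.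
rewrite (_ : (2 ^ n.+1 == 1)%N = false); last by apply/negbTE; rewrite neq_ltn hK orbT.
by rewrite Q0 hX SF eqn0Ngt expn_gt0 /= eqxx sub0r oppP.
Qed.

Lemma ComS n : Der n -> QXv n -> Com n.
Proof.
move=> hD hX.
pose G p := forall j, (j < 2 ^ n.+1)%N -> Qx n (Sqxy j p) = Sqxy j (Qx n p).
have GD a b : G a -> G b -> G (a + b).
  by move=> ha hb j hj; rewrite SqD QD QD SqD (ha j hj) (hb j hj).
have GM a b : G a -> G b -> G (a * b).
  move=> ha hb j hj; rewrite Cartan Qsum hD SqD !Cartan -big_split /=.
  apply: eq_bigr => k _; have hk := ltn_ord k.
  have hk1 : (k < 2 ^ n.+1)%N by lia.
  have hk2 : (j - k < 2 ^ n.+1)%N by lia.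
  by rewrite hD (ha k hk1) (hb _ hk2).
have GC c : G c%:MP.
  by move=> j hj; rewrite SC QC; case: ifP; rewrite ?QC ?Q0 ?Sq0.
have GX i : G 'X_i.
  move=> j hj; rewrite SX hX SF.
  case: j hj => [|[|j]] hj /=; first by rewrite hX.
    rewrite expr2 hD mulrC addxx.
    by rewrite (_ : (1 == 2 ^ n.+1)%N = false) //; apply/negbTE; rewrite neq_ltn K2.
  by rewrite Q0 (_ : (j.+2 == 2 ^ n.+1)%N = false) //; apply/negbTE; rewrite neq_ltn hj.
have G1 : G 1 by rewrite -mpolyC1; exact: GC.
have GXn i k : G ('X_i ^+ k).
  by elim: k => [|k IH]; [rewrite expr0 | rewrite exprS; apply: GM].
have GXm m : G 'X_[m].
  rewrite mpolyXE_id; apply: big_ind => //; exact: GM.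
move=> j p hj; elim/mpolyind: p j hj => [|c m p _ _ IH] j hj.
  by rewrite Sq0 Q0 Sq0.
by apply: GD => //; rewrite -mul_mpolyC; apply: GM.
Qed.

Lemma DerS n : Der n -> Com n -> Der n.+1.
Proof.
move=> hD hC p q /=; set K := (2 ^ n.+1)%N.
have E1 : \sum_(a < K.+1) (Qx n (Sqxy a p) * Sqxy (K - a) q - Sqxy a (Qx n p) * Sqxy (K - a) q)
   = (Qx n (Sqxy K p) - Sqxy K (Qx n p)) * q.
  rewrite big_ord_recr /= big1 ?add0r; first by rewrite subnn S0 mulrBl.
  by move=> a _; rewrite hC ?subrr //= ltn_ord.
have E2 : \sum_(a < K.+1) (Sqxy a p * Qx n (Sqxy (K - a) q) - Sqxy a p * Sqxy (K - a) (Qx n q))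
   = p * (Qx n (Sqxy K q) - Sqxy K (Qx n q)).
  rewrite big_ord_recl /= big1 ?addr0; first by rewrite subn0 S0 mulrBr.
  move=> a _; rewrite hC ?subrr //=.
  rewrite /bump /=; have := ltn_ord a; have := K2 n; rewrite -/K; lia.
rewrite Cartan Qsum.
under eq_bigr do rewrite hD.
rewrite hD SqD !Cartan big_split /= -E1 -E2 !sumrB.
by rewrite opprD addrACA.
Qed.

Lemma Main n : Der n /\ QXv n /\ Com n.
Proof.
elim: n => [|n [hD [hX hC]]].
  by split; [exact: Der0 | split; [exact: QX0 | apply: ComS; [exact: Der0 | exact: QX0]]].
have hD' := DerS hD hC; have hX' := QXS hX.
by split; [| split; [| apply: ComS]].
Qed.

Lemma char2_eq (a b c : P) : a = b + 2%:R * c -> a = b.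
Proof. by rewrite two0 mul0r addr0. Qed.

Lemma Qpow n l f : Der n -> Qx n (f ^+ (2 * l + 1)) = f ^+ (2 * l) * Qx n f.
Proof.
move=> hD.
have Q2 : Qx n (f ^+ 2) = 0 by rewrite expr2 hD [f * _]mulrC addxx.
have Q2l : Qx n ((f ^+ 2) ^+ l) = 0.
  elim: l => [|l IH]; first by rewrite expr0 -mpolyC1 QC.
  by rewrite exprS hD Q2 IH mul0r mulr0 addr0.
by rewrite addn1 exprSr hD exprM Q2l mul0r add0r.
Qed.

Lemma stepw (X Y A B : P) k : (X + Y) * A = X ^+ k.+1 + Y ^+ k.+1 ->
  (X + Y) * B = X ^+ k + Y ^+ k ->
  (X + Y) * - ((X + Y) * A + X * Y * B) = X ^+ k.+2 + Y ^+ k.+2.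
Proof.
move=> hA hB; rewrite mulrN oppP.
transitivity ((X + Y) * ((X + Y) * A) + X * Y * ((X + Y) * B)); first by ring.
rewrite hA hB; apply: (@char2_eq _ _ (X * Y * (X ^+ k + Y ^+ k))).
rewrite !exprS; ring.
Qed.

Lemma phi_wbar k : (x0 + x1) * phi (wbar_pair k).1 = x0 ^+ k.+1 + x1 ^+ k.+1 /\
                   (x0 + x1) * phi (wbar_pair k).2 = x0 ^+ k + x1 ^+ k.
Proof.
elim: k => [|k IH] /=.
  by rewrite rmorph1 rmorph0 mulr1 mulr0 !expr1 !expr0 -(addxx 1).
case: (wbar_pair k) IH => a b /= [IHa IHb]; split => //.
rewrite rmorphN rmorphD !rmorphM /= phi_w1 phi_w2.
exact: stepw.
Qed.

Lemma wbar_pairS k : wbar_pair k.+1 = (- (w1 * wbar k + w2 * (wbar_pair k).2), wbar k).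
Proof. by rewrite /wbar /=; case: (wbar_pair k). Qed.

Lemma wbarS k : wbar k.+2 = w1 * wbar k.+1 + w2 * wbar k.
Proof.
have E : wbar k.+2 = - (w1 * wbar k.+1 + w2 * (wbar_pair k.+1).2).
  by rewrite [LHS]/wbar wbar_pairS.
by rewrite E oppP wbar_pairS.
Qed.

Section Ideal.
Variable M : nat.
Local Notation I := (in_Gr_ideal M).

Lemma I0 : I 0.
Proof. by exists [::]; rewrite big_nil. Qed.

Lemma ID a b : I a -> I b -> I (a + b).
Proof.
move=> [s [hs ->]] [t [ht ->]]; exists (s ++ t).
by rewrite all_cat hs ht big_cat.
Qed.

Lemma IM r a : I a -> I (r * a).
Proof.
move=> [s [hs ->]]; exists [seq (r * c.1, c.2) | c <- s]; split.
  by rewrite all_map.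
by rewrite big_map mulr_sumr; apply: eq_bigr => c _; rewrite mulrA.
Qed.

Lemma IW k : (M - 1 <= k)%N -> I (wbar k).
Proof. by move=> hk; exists [:: (1, k)]; rewrite /= hk big_seq1 mul1r. Qed.
End Ideal.

Lemma L_hvt (u v A B C : P) : C = u * B + v * A -> v * A = C + u * B.
Proof. move=> ->; apply/esym; apply: (@char2_eq _ _ (u * B)); ring. Qed.

Lemma char2_eq' (a b c : P) : a + 2%:R * c = b -> a = b.
Proof. by rewrite two0 mul0r addr0. Qed.

Lemma Lc1 (u v H0 H1 H2 Ht V U : P) : H2 = u * H1 + v * H0 ->
  v * V * H0 + u * U * Ht = V * H2 + u * (V * H1 + U * Ht).
Proof. move=> ->; apply: (@char2_eq' _ _ (u * V * H1)); ring. Qed.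

Lemma Lc2 (u v H1 Ht V U : P) :
  v * V * H1 = v * (V * H1 + U * Ht) + U * (v * Ht).
Proof. apply: (@char2_eq' _ _ (U * v * Ht)); ring. Qed.

Lemma chain M t : (M - 1 = t.+1)%N -> forall j k, (k + j = t)%N ->
  in_Gr_ideal M (w2 ^+ j * wbar k + w1 ^+ j * wbar t) /\
  in_Gr_ideal M (w2 ^+ j * wbar k.+1).
Proof.
move=> hM.
have hN : in_Gr_ideal M (wbar t.+1) by apply: IW; rewrite hM.
have hN1 : in_Gr_ideal M (wbar t.+2) by apply: IW; rewrite hM.
have hvt : in_Gr_ideal M (w2 * wbar t).
  rewrite (L_hvt (wbarS t)).
  by apply: ID => //; apply: IM.
elim=> [|j IH] k hk.
  rewrite addn0 in hk; subst k; rewrite !expr0 !mul1r addxx; split; [exact: I0 | exact: hN].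
have [A B] := IH k.+1 (etrans (addSnnS _ _) hk).
split.
  rewrite !exprS (Lc1 _ _ _ (wbarS k)).
  by apply: ID => //; apply: IM.
rewrite exprS (Lc2 w1 w2 _ (wbar t) _ (w1 ^+ j)).
by apply: ID; apply: IM.
Qed.

Lemma LQ (X Y W : P) k l : (X + Y) * W = X ^+ k.+1 + Y ^+ k.+1 ->
  (X * Y) ^+ (2 * l) * (X ^+ k.+2 * Y + X * Y ^+ k.+2) = (X + Y) * (X * Y) ^+ (2 * l + 1) * W.
Proof.
move=> H; rewrite [in RHS]addn1 [in RHS]exprS.
transitivity ((X * Y) ^+ (2 * l) * (X * Y) * ((X + Y) * W)); last first.
  generalize ((X * Y) ^+ (2 * l) : P) => C; ring.
rewrite H !exprS.
generalize ((X * Y) ^+ (2 * l) : P) (X ^+ k : P) (Y ^+ k : P) => C A B; ring.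
Qed.

Lemma Qval n l : Q n (w2 ^+ (2 * l + 1)) = w1 * w2 ^+ (2 * l + 1) * wbar (2 ^ n.+1 - 2).
Proof.
have [hD [hX _]] := Main n.
apply: (@msym_fundamental_un 2 F2); rewrite -/Sy phi_Q rmorphXn /= phi_w2 Qpow //.
rewrite hD /x0 /x1 !hX -/x0 -/x1.
have [k hk] : exists k, (2 ^ n.+1 = k.+2)%N.
  by exists (2 ^ n.+1 - 2)%N; have := K2 n; lia.
rewrite hk !subSS subn0 !rmorphM rmorphXn /= phi_w1 phi_w2.
have [H _] := phi_wbar k.
exact: (LQ l H).
Qed.

Unset Implicit Arguments.
Set Strict Implicit.

Theorem proposition5p8 (n l : nat) :
  eq_in_Gr2 (2 ^ n.+1 + 1 + 2 * l)%N
    (Q n (w2 ^+ (2 * l + 1)))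
    (w1 ^+ (2 * l + 2) * wbar (2 ^ n.+1 - 1 + 2 * l)).
Proof.
rewrite /eq_in_Gr2 Qval oppP.
have hK := K2 n.
set t := (2 ^ n.+1 - 1 + 2 * l)%N.
have hM : ((2 ^ n.+1 + 1 + 2 * l) - 1 = t.+1)%N by rewrite /t; lia.
have [A _] := chain hM (j := 2 * l + 1) (k := 2 ^ n.+1 - 2) ltac:(rewrite /t; lia).
have := IM w1 A; rewrite mulrDr !mulrA -exprS.
by rewrite (_ : (2 * l + 2 = (2 * l + 1).+1)%N) //; lia.
Qed.
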